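(* If $A=(A_n)_{n=0}^\infty$ is an Appell sequence, then for $n\geq0$, \[ \varphi_A(e_n)=\frac{A_{(1^n)}}{n!}. \]
   Context: An Appell sequence is a sequence of polynomials $(A_n)_{n\ge0}$ with $A_0=1$ and $A_n'=nA_{n-1}$ for $n\ge1$. For a partition $\lambda$ of length $r$, let $(n_1,\dots,n_r)=(\lambda_r,\lambda_{r-1}+1,\dots,\lambda_1+r-1)$ and $A_\lambda=\operatorname{Wr}[A_{n_1},\dots,A_{n_r}]/\Delta(n_1,\dots,n_r)$, where $\operatorname{Wr}$ is the Wronskian and $\Delta$ the Vandermonde determinant $\prod_{i<j}(x_j-x_i)$. $(1^n)=(1,1,\dots,1)$ ($n$ ones). $e_n$ is the elementary symmetric function and $\varphi_A$ is the ring homomorphism from the ring of symmetric functions to $\mathbb{R}[x]$ with $\varphi_A(h_m)=A_m/m!$, $h_m$ the complete homogeneous symmetric functions. *)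

(* Defs.v *)
From HB Require Import structures.
From mathcomp Require Import all_boot all_order all_algebra.
From mathcomp Require Import mpoly.
Set Implicit Arguments. Unset Strict Implicit. Unset Printing Implicit Defensive.
Import Order.TTheory GRing.Theory Num.Theory.
Local Open Scope ring_scope.

Definition appell (R : ringType) (A : nat -> {poly R}) : Prop :=
  A 0%N = 1 /\ forall n : nat, (A n.+1)^`() = n.+1%:R *: A n.

Definition wronskian (R : comRingType) (fs : seq {poly R}) : {poly R} :=
  \det (\matrix_(i < size fs, j < size fs) (nth 0 fs j)^`(i)).

Definition vandermonde (R : ringType) (ns : seq nat) : R :=
  \prod_(j < size ns) \prod_(i < j) ((nth 0%N ns j)%:R - (nth 0%N ns i)%:R).

Definition is_partition (la : seq nat) : bool :=
  sorted geq la && all (fun k => 0 < k)%N la.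

(* (n_1, ..., n_r) = (lambda_r, lambda_{r-1} + 1, ..., lambda_1 + r - 1);
   0-indexed: n_i = lambda_{r-1-i} (0-indexed) + i. *)
Definition partition_degrees (la : seq nat) : seq nat :=
  [seq (nth 0%N la (size la - 1 - i) + i)%N | i <- iota 0 (size la)].

Definition appell_schur (R : fieldType) (A : nat -> {poly R}) (la : seq nat)
  : {poly R} :=
  let ns := partition_degrees la in
  (vandermonde R ns)^-1 *: wronskian [seq A k | k <- ns].

Definition ones (n : nat) : seq nat := nseq n 1%N.

Definition hsym (R : ringType) (N d : nat) : {mpoly R[N]} :=
  \sum_(m : 'X_{1..N < d.+1} | mdeg m == d) 'X_[m].

Definition htuple (R : ringType) (N : nat) : N.-tuple {mpoly R[N]} :=
  [tuple hsym R N i.+1 | i < N].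

(* Image under phi_A of a polynomial expression P(h_1, ..., h_N):
   phi_A(P(h_1,...,h_N)) = P(A_1/1!, ..., A_N/N!). *)
Definition phiA_expr (R : fieldType) (A : nat -> {poly R}) (N : nat)
  (P : {mpoly R[N]}) : {poly R} :=
  mmap (fun c : R => c%:P) (fun i : 'I_N => ((i.+1)`!%:R)^-1 *: A i.+1) P.

(* Main.v *)
Require Import Defs.
From HB Require Import structures.
From mathcomp Require Import all_boot all_order all_algebra ring.
From mathcomp Require Import mpoly.
Set Implicit Arguments. Unset Strict Implicit. Unset Printing Implicit Defensive.
Import Order.TTheory GRing.Theory Num.Theory.
Local Open Scope ring_scope.

Section Qrec.
Variable T : comNzRingType.
Implicit Types (c d : nat -> T).

Fixpoint qf c (m : nat) : nat -> T :=
  match m with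
  | 0 => fun _ => 1
  | m'.+1 => fun i => if (i <= m')%N then qf c m' i
       else \sum_(k < m'.+1) (-1)^+k * c k.+1 * qf c m' (m' - k)
  end.
Definition q c m := qf c m m.

Lemma qf_stable c m i : (i <= m)%N -> qf c m i = q c i.
Proof.
elim: m i => [|m IH] i /=; first by rewrite leqn0 => /eqP ->.
rewrite leq_eqVlt => /orP [/eqP ->|]; first by [].
by rewrite ltnS => him; rewrite him IH.
Qed.

Lemma q0 c : q c 0 = 1. Proof. by []. Qed.

Lemma qS c m : q c m.+1 = \sum_(k < m.+1) (-1)^+k * c k.+1 * q c (m - k).
Proof.
rewrite /q /= ltnn; apply: eq_bigr => k _; by rewrite qf_stable // leq_subr.
Qed.

Lemma q_uniq c (f : nat -> T) M : f 0%N = 1 ->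
  (forall m, (m < M)%N -> f m.+1 = \sum_(k < m.+1) (-1)^+k * c k.+1 * f (m - k)%N) ->
  forall m, (m <= M)%N -> f m = q c m.
Proof.
move=> f0 fS; elim/ltn_ind => [[|m]] IH hm; first by rewrite f0.
rewrite fS // qS; apply: eq_bigr => k _; congr (_ * _).
apply: IH; first by rewrite ltnS leq_subr.
by apply: leq_trans (leq_subr _ _) (ltnW hm).
Qed.

Lemma q_ext c c' M : (forall k, (0 < k <= M)%N -> c k = c' k) ->
  forall m, (m <= M)%N -> q c m = q c' m.
Proof.
move=> hc; apply: q_uniq => // m hm; rewrite qS; apply: eq_bigr => k _.
by rewrite hc // /= (leq_trans (ltn_ord k)).
Qed.

Definition cq c k := if k is 0 then 1 else c k.
Definition rel c d := forall m, (0 < m)%N ->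
  \sum_(k < m.+1) (-1)^+k * cq c k * cq d (m - k)%N = 0.

Lemma cq_q c j : cq (q c) j = q c j.
Proof. by case: j. Qed.

Lemma rel_q c : rel c (q c).
Proof.
move=> [|m] // _; rewrite big_ord_recl /= expr0 !mul1r subn0 qS.
rewrite -[X in X + _ = 0]opprK addrC; apply/eqP; rewrite subr_eq0 -sumrN.
apply/eqP; apply: eq_bigr => k _.
by rewrite /bump /= add1n subSS cq_q exprS !mulN1r !mulNr.
Qed.

Lemma rel_uniq c d : rel c d -> forall m, cq d m = q c m.
Proof.
move=> hr m; apply: (@q_uniq _ (cq d) m) => // k _.
have := hr k.+1 isT; rewrite big_ord_recl /= expr0 !mul1r subn0.
move/eqP; rewrite addr_eq0 => /eqP ->; rewrite -sumrN.
apply: eq_bigr => i _.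
by rewrite /bump /= add1n subSS exprS !mulN1r !mulNr opprK.
Qed.

Lemma rel_sym c d : rel c d -> rel d c.
Proof.
move=> hr m hm; have := hr m hm.
rewrite (reindex_inj rev_ord_inj) /= => H.
have -> : \sum_(k < m.+1) (-1) ^+ k * cq d k * cq c (m - k) =
   (-1)^+m * \sum_(k < m.+1) (-1) ^+ (m.+1 - k.+1)%N * cq c (m.+1 - k.+1)%N * cq d (m - (m.+1 - k.+1))%N.
  rewrite mulr_sumr; apply: eq_bigr => k _.
  have hk : (k <= m)%N by rewrite -ltnS.
  rewrite subSS subKn //.
  have s : (-1)^+k = (-1)^+m * (-1)^+(m-k) :> T.
    have e : (-1)^+m = (-1)^+(m-k) * (-1)^+k :> T by rewrite -exprD subnK.
    by rewrite e mulrAC -exprMn mulrNN mulr1 expr1n mul1r.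
  rewrite s; ring.
by rewrite H mulr0.
Qed.

End Qrec.

Lemma q_morph (T U : comNzRingType) (phi : {rmorphism T -> U}) (c : nat -> T) m :
  phi (q c m) = q (fun k : nat => phi (c k) : U) m.
Proof.
apply: (@q_uniq _ _ (fun m => phi (q c m)) m) => //; first by rewrite rmorph1.
move=> k _; rewrite qS rmorph_sum; apply: eq_bigr => i _.
by rewrite !rmorphM rmorphXn rmorphN1.
Qed.


Lemma hess_det (T : comNzRingType) (c : nat -> T) n :
  \det (\matrix_(i < n, j < n) if (i <= j.+1)%N then cq c (j.+1 - i) else 0)
  = q c n.
Proof.
pose H := \matrix_(i < n.+1, j < n.+1) if (j <= i)%N then cq c (i - j) else 0.
pose E := \matrix_(i < n.+1, j < n.+1)
   if (j <= i)%N then (-1)^+(i - j) * q c (i - j) else 0.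
have HE : H *m E = 1%:M.
  apply/matrixP => i j; rewrite !mxE.
  pose G k := (if (k <= i)%N then cq c (i - k) else 0) *
              (if (j <= k)%N then (-1)^+(k - j) * q c (k - j) else 0).
  rewrite (eq_bigr (fun k : 'I_n.+1 => G k)); last by move=> k _; rewrite !mxE.
  rewrite -(big_mkord xpredT G).
  case: (leqP j i) => hji; last first.
    rewrite big1_seq; last first.
      move=> k _; rewrite /G; case: (leqP k i) => hk; last by rewrite mul0r.
      by rewrite (leqNgt j k) (leq_ltn_trans hk hji) mulr0.
    by rewrite eq_sym; case: eqP => // hij; move: hji; rewrite hij ltnn.
  rewrite (big_cat_nat (n := j)) //= ; last by apply: ltnW; apply: leq_ltn_trans hji (ltn_ord i).
  rewrite big_nat_cond big1 ?add0r; last first.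
    by move=> k /andP [/andP [_ hk] _]; rewrite /G (leqNgt j k) hk mulr0.
  rewrite (big_cat_nat (n := i.+1)) ?(ltn_ord i) ?leqW //=.
  rewrite [X in _ + X]big_nat_cond [X in _ + X]big1 ?addr0; last first.
    by move=> k /andP [/andP [hk _] _]; rewrite /G (leqNgt k i) hk mul0r.
  rewrite (@big_addn _ _ _ 0 i.+1 j) subSn //.
  have hr : rel (q c) c := rel_sym (@rel_q _ c).
  have := hr (i - j)%N.
  case: (ltnP 0 (i - j)) => hd.
    move=> /(_ isT) hz.
    have -> : (i == j) = false by apply/eqP => e; move: hd; rewrite e subnn.
    rewrite -[RHS]hz big_mkord; apply: eq_bigr => l _.
    have hl : (l <= i - j)%N := ltn_ord l.
    rewrite /G (leq_addl l j) addnK.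
    have -> : (l + j <= i)%N by rewrite addnC -leq_subRL.
    have -> : (i - (l + j) = i - j - l)%N by rewrite addnC subnDA.
    by rewrite cq_q mulrC.
  move=> _; have eij : i = j.
    by apply: val_inj; apply/eqP; rewrite eqn_leq hji andbT -subn_eq0 -leqn0.
  rewrite eij subnn eqxx big_nat1 /G add0n leqnn subnn expr0 mul1r.
  rewrite hji; have -> : (i - j = 0)%N by apply/eqP; rewrite -leqn0.
  by rewrite /= mulr1.
have dH : \det H = 1.
  rewrite det_trig; last by apply/is_trig_mxP => i j hij; rewrite mxE leqNgt hij.
  by rewrite big1 // => i _; rewrite mxE leqnn subnn.
have adjE : \adj H = E.
  by rewrite -[\adj H]mulmx1 -HE mulmxA mul_adj_mx dH mul1mx.
have := congr1 (fun M : 'M_n.+1 => M ord_max ord0) adjE.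
rewrite /= !mxE /cofactor /= subn0 add0n => hc.
have -> : \matrix_(i < n, j < n) (if (i <= j.+1)%N then cq c (j.+1 - i) else 0)
   = (row' ord0 (col' ord_max H))^T.
  apply/matrixP => i j; rewrite !mxE /=.
  have -> : (bump n i = i) by rewrite /bump leqNgt ltn_ord.
  by [].
rewrite det_tr; have := congr1 (fun x => (-1)^+n * x) hc.
have s2 : (-1)^+n * (-1)^+n = 1 :> T by rewrite -exprMn mulrNN mulr1 expr1n.
by rewrite /= !mulrA s2 !mul1r.
Qed.

Section Newton.
Variable (R : comNzRingType) (N : nat).

Lemma hsymX_coef d (nu mu : 'X_{1..N}) :
  (hsym R N d * 'X_[nu])@_mu = ((nu <= mu)%MM && (mdeg (mu - nu) == d))%:R.
Proof.
rewrite /hsym mulr_suml raddf_sum /=.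
under eq_bigr => m _ do rewrite -mpolyXD mcoeffX.
case: (boolP ((nu <= mu)%MM && _)) => [/andP [hle hd]|hn].
  have hb : (mdeg (mu - nu) < d.+1)%N by rewrite (eqP hd).
  rewrite (bigD1 (BMultinom hb)) /=; last by rewrite hd.
  rewrite submK // eqxx big1 ?addr0 // => m /andP [_ hm].
  case: eqP => // e; move: hm.
  have -> : m = BMultinom hb by apply/val_inj; rewrite /= -e addmK.
  by rewrite eqxx.
rewrite big1 // => m /eqP hm; case: eqP => // e.
move: hn; rewrite -e lem_addl /= addmK hm eqxx //.
Qed.

Lemma hsym0 : hsym R N 0 = 1.
Proof.
apply/mpolyP => mu; rewrite mcoeff1 -[hsym R N 0]mulr1 -mpolyX0 hsymX_coef.
have -> : (0 <= mu)%MM by apply/mnm_lepP => i; rewrite mnm0E.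
by rewrite subm0 mdeg_eq0.
Qed.

Lemma altbin (t m : nat) : (0 < t)%N -> (t <= m)%N ->
  \sum_(k < m.+1) (-1)^+k * ('C(t, k))%:R = 0 :> R.
Proof.
move=> t0 tm.
rewrite -(big_mkord xpredT (fun k => (-1)^+k * ('C(t, k))%:R)).
rewrite (big_cat_nat (n := t.+1)) //= ?ltnS // [X in _ + X]big_nat_cond.
rewrite [X in _ + X]big1 ?addr0; last first.
  by move=> k /andP [/andP [hk _] _]; rewrite bin_small // mulr0.
rewrite big_mkord.
have := exprDn 1 (-1 : R) t; rewrite addrN expr0n eqn0Ngt t0 /= => h.
apply: etrans (esym h).
by apply: eq_bigr => k _; rewrite expr1n mul1r mulr_natr.
Qed.

Lemma newton m : (0 < m)%N ->
  \sum_(k < m.+1) ((-1)^+k : R) *: (mesym N R k * hsym R N (m - k)) = 0.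
Proof.
move=> m0; apply/mpolyP => mu; rewrite mcoeff0 raddf_sum /=.
pose T := [set i | (0 < mu i)%N].
have key k : (k <= m)%N -> (mesym N R k * hsym R N (m - k))@_mu =
    (mdeg mu == m)%:R * ('C(#|T|, k))%:R.
  move=> km; rewrite mesymE mulr_suml raddf_sum /=.
  under eq_bigr do rewrite mulrC hsymX_coef.
  rewrite -cards_draws -sum1_card natr_sum mulr_sumr big_mkcond [RHS]big_mkcond /=.
  apply: eq_bigr => S _; rewrite inE.
  case: (boolP (#|S| == k)) => hS; rewrite ?andbF ?andbT //=.
  have hsub : (mesym1 S <= mu)%MM = (S \subset T).
    apply/mnm_lepP/subsetP => [h i iS|h i]; rewrite ?mnmE.
      by have := h i; rewrite mnmE iS inE.
    by case: (boolP (i \in S)) => // /h; rewrite inE.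
  rewrite hsub; case: (boolP (S \subset T)) => hST /=; first rewrite mulr1.
  2: by []. congr (_%:R); congr (nat_of_bool _).
  have hle : (mesym1 S <= mu)%MM by rewrite hsub.
  have e := submK hle; have := congr1 mdeg e; rewrite mdegD mdeg_mesym1 (eqP hS) => emu.
  rewrite -emu -{2}[m](subnK km) eqn_add2r //.
rewrite (eq_bigr (fun k : 'I_m.+1 => (-1)^+k * ((mdeg mu == m)%:R * ('C(#|T|, k))%:R))); last by move=> k _; rewrite mcoeffZ key // -ltnS.
case: (eqP (x := mdeg mu) (y := m)) => hdeg; last first.
  by rewrite big1 // => k _; rewrite mul0r mulr0.
under eq_bigr do rewrite mul1r.
apply: altbin.
  rewrite card_gt0; apply/set0Pn.
  apply/existsP; apply: contraT; rewrite negb_exists => /forallP h.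
  have : mdeg mu = 0%N.
    by rewrite mdegE big1 // => i _; have := h i; rewrite inE lt0n negbK => /eqP.
  by rewrite hdeg => m00; move: m0; rewrite m00.
rewrite -hdeg mdegE -sum1_card big_mkcond /=; apply: leq_sum => i _.
by rewrite inE; case: (mu i).
Qed.

End Newton.

Lemma comp_mpolyA (R : comNzRingType) n k l (p : {mpoly R[n]})
  (lq : n.-tuple {mpoly R[k]}) (lr : k.-tuple {mpoly R[l]}) :
  (p \mPo lq) \mPo lr = p \mPo [tuple (tnth lq i \mPo lr) | i < n].
Proof.
rewrite [p \mPo lq]comp_mpolyEX [RHS]comp_mpolyEX raddf_sum /=.
apply: eq_bigr => m _; rewrite comp_mpolyZ; congr (_ *: _).
rewrite !comp_mpolyX rmorph_prod /=; apply: eq_bigr => i _.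
by rewrite rmorphXn tnth_mktuple.
Qed.

Lemma sum_pred_succ (T : nzRingType) n k (f : nat -> T) :
  \sum_(i < n | i.+1 == k) f i.+1 = if (0 < k <= n)%N then f k else 0.
Proof.
case: k => [|k] /=; first by rewrite big_pred0.
case: (ltnP k n) => hk.
  rewrite (big_pred1 (Ordinal hk)) //= => i; by rewrite eqSS.
by rewrite big_pred0 // => i; rewrite eqSS; apply/negbTE; rewrite neq_ltn (leq_trans (ltn_ord i) hk).
Qed.

Lemma cq_morph (T U : comNzRingType) (phi : {rmorphism T -> U}) (c : nat -> T) m :
  phi (cq c m) = cq (fun k => phi (c k)) m.
Proof. by case: m => //=; rewrite rmorph1. Qed.

Lemma cq_ext (T : comNzRingType) (c c' : nat -> T) m :
  ((0 < m)%N -> c m = c' m) -> cq c m = cq c' m.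
Proof. by case: m => // m /(_ isT) /= ->. Qed.

Section Poly.
Variables (R : comNzRingType) (n : nat).

Definition Yv (k : nat) : {mpoly R[n]} := \sum_(i < n | i.+1 == k) 'X_i.
Definition Etup := [tuple mesym n R i.+1 | i < n].
Definition QT := [tuple q Yv i.+1 | i < n].

Lemma Yv_comp k (g : nat -> {mpoly R[n]}) (lq : n.-tuple {mpoly R[n]}) :
  (forall i : 'I_n, tnth lq i = g i.+1) ->
  Yv k \mPo lq = if (0 < k <= n)%N then g k else 0.
Proof.
move=> hg; rewrite /Yv raddf_sum /= -sum_pred_succ; apply: eq_bigr => i _.
by rewrite comp_mpolyXU -tnth_nth hg.
Qed.

Lemma rel_eh : rel (fun k => mesym n R k) (fun k => hsym R n k).
Proof.
move=> m m0; rewrite -[RHS](newton R n m0); apply: eq_bigr => k _.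
have ce j : cq (fun k => mesym n R k) j = mesym n R j by case: j => //; rewrite mesym0E.
have ch j : cq (fun k => hsym R n k) j = hsym R n j by case: j => //; rewrite hsym0.
by rewrite ce ch -mulrA -mul_mpolyC rmorphXn rmorphN1.
Qed.

Lemma h_q m : hsym R n m = q (fun k => mesym n R k) m.
Proof.
rewrite -(rel_uniq rel_eh m); by case: m => //; rewrite hsym0.
Qed.

Lemma e_q m : mesym n R m = q (fun k => hsym R n k) m.
Proof.
rewrite -(rel_uniq (rel_sym rel_eh) m); by case: m => //; rewrite mesym0E.
Qed.

Lemma QE m : q Yv m \mPo Etup = hsym R n m.
Proof.
rewrite (q_morph (comp_mpoly Etup)) h_q; apply: (q_ext (M := m)) => // k /andP [k0 _].
apply: etrans; first apply: (@Yv_comp k (fun k => mesym n R k)).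
  by move=> i; rewrite tnth_mktuple.
rewrite k0 /=; case: leqP => // hk; by rewrite mesym_geqnE.
Qed.

Lemma QH m : (m <= n)%N -> q Yv m \mPo htuple R n = mesym n R m.
Proof.
move=> hm; rewrite (q_morph (comp_mpoly (htuple R n))) e_q.
apply: (q_ext (M := m)) => // k /andP [k0 km].
apply: etrans; first apply: (@Yv_comp k (fun k => hsym R n k)).
  by move=> i; rewrite tnth_mktuple.
by rewrite k0 (leq_trans km hm).
Qed.

Lemma QQ m : (m <= n)%N -> q Yv m \mPo QT = cq Yv m.
Proof.
move=> hm; rewrite (q_morph (comp_mpoly QT)).
rewrite (rel_uniq (rel_sym (rel_q Yv))); apply: (q_ext (M := m)) => // k /andP [k0 km].
apply: etrans; first apply: (@Yv_comp k (q Yv)).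
  by move=> i; rewrite tnth_mktuple.
by rewrite k0 (leq_trans km hm).
Qed.

Lemma P_eq (P : {mpoly R[n]}) : P \mPo htuple R n = mesym n R n -> P = q Yv n.
Proof.
move=> hP.
have h1 : P \mPo QT = cq Yv n.
  apply: msym_fundamental_un.
  rewrite comp_mpolyA.
  have -> : [tuple tnth QT i \mPo Etup | i < n] = htuple R n.
    by apply: eq_from_tnth => i; rewrite !tnth_mktuple QE.
  rewrite hP (cq_morph (comp_mpoly Etup)).
  have -> : mesym n R n = cq (fun k => mesym n R k) n by case: (n) => //; rewrite mesym0E.
  apply: cq_ext => hn; symmetry; apply: etrans; first apply: (@Yv_comp n (fun k => mesym n R k)).
    by move=> i; rewrite tnth_mktuple.
  by rewrite hn leqnn.
have h2 : [tuple tnth QT i \mPo QT | i < n] = [tuple 'X_i | i < n].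
  apply: eq_from_tnth => i; rewrite !tnth_mktuple QQ //= /Yv.
  by rewrite (big_pred1 i) // => j; rewrite eqSS.
rewrite -[P]comp_mpoly_id -h2 -comp_mpolyA h1.
rewrite (cq_morph (comp_mpoly QT)) -cq_q; apply: cq_ext => hn.
apply: etrans; first apply: (@Yv_comp n (q Yv)).
  by move=> i; rewrite tnth_mktuple.
by rewrite hn leqnn.
Qed.

End Poly.

Lemma appell_derivn (R : fieldType) (A : nat -> {poly R}) : appell A ->
  forall m i, (A m)^`(i) = if (i <= m)%N then (m ^_ i)%:R *: A (m - i)%N else 0.
Proof.
move=> [A0 AS] m; elim => [|i IH]; first by rewrite derivn0 ffactn0 scale1r subn0.
rewrite derivnS IH; case: (ltngtP i m) => him.
- rewrite derivZ.
  have -> : (m - i = (m - i.+1).+1)%N by rewrite subnSK.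
  by rewrite AS scalerA -natrM ffactnSr subnSK.
- by rewrite raddf0.
- by rewrite him subnn A0 derivZ -polyC1 derivC scaler0.
Qed.

Lemma size_pd n : size (partition_degrees (ones n)) = n.
Proof. by rewrite /partition_degrees size_map size_iota size_nseq. Qed.

Lemma nth_pd n j : (j < n)%N -> nth 0%N (partition_degrees (ones n)) j = j.+1.
Proof.
move=> jn; rewrite /partition_degrees (nth_map 0%N) ?size_iota ?size_nseq // nth_iota ?size_nseq // add0n.
by rewrite /ones nth_nseq ifT ?add1n //; rewrite -subnDA subnSK ?leq_subr //; apply: leq_ltn_trans jn.
Qed.

Lemma prod_sub_fact (R : nzRingType) j :
  \prod_(i < j) ((j.+1)%:R - (i.+1)%:R : R) = (j`!)%:R.
Proof.
rewrite (eq_bigr (fun i : 'I_j => ((j - i)%N)%:R)); last first.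
  by move=> i _; rewrite -natrB ?subSS // ltnS ltnW.
rewrite -natr_prod; congr (_%:R).
rewrite (reindex_inj rev_ord_inj) /=.
rewrite (eq_bigr (fun i : 'I_j => i.+1)); last by move=> i _; rewrite subKn.
elim: j => [|j IH]; first by rewrite big_ord0.
by rewrite big_ord_recr /= IH factS mulnC.
Qed.

Lemma prod_factS n : (\prod_(j < n) (j.+1)`! = n`! * \prod_(j < n) j`!)%N.
Proof.
elim: n => [|n IH]; first by rewrite !big_ord0.
by rewrite big_ord_recr /= IH [in RHS]big_ord_recr /= factS; ring.
Qed.

Lemma schur_ones (R : realFieldType) (A : nat -> {poly R}) : appell A -> forall n,
  (n`!%:R)^-1 *: appell_schur A (ones n) =
  \det (\matrix_(i < n, j < n)
          if (i <= j.+1)%N then ((j.+1 - i)`!%:R)^-1 *: A (j.+1 - i)%N else 0).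
Proof.
move=> hA n; rewrite /appell_schur /wronskian /vandermonde /=.
have hs := size_pd n; have hnth := @nth_pd n.
move: hs hnth; generalize (partition_degrees (ones n)) => ns hs hnth.
rewrite size_map hs.
set G := \matrix_(i < n, j < n) (if (i <= j.+1)%N then ((j.+1 - i)`!%:R : R)^-1 *: A (j.+1 - i)%N else 0).
have fnz k : (k`!%:R : R) != 0 by rewrite pnatr_eq0 -lt0n fact_gt0.
have -> : \matrix_(i < n, j < n)
    (nth 0 [seq A k | k <- ns] j)^`(i)
    = G *m diag_mx (\row_(j < n) ((j.+1)`!%:R : R)%:P).
  apply/matrixP => i j; rewrite mul_mx_diag !mxE (nth_map 0%N) ?hs //.
  rewrite hnth // appell_derivn //.
  case: ifP => hij; last by rewrite mul0r.
  rewrite mulrC mul_polyC scalerA; congr (_ *: _).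
  apply: (@mulIf _ ((j.+1 - i)`!%:R)); first exact: fnz.
  by rewrite -natrM ffact_fact // -mulrA mulVf // mulr1.
rewrite det_mulmx det_diag.
rewrite (eq_bigr (fun j : 'I_n => ((j.+1)`!%:R : R)%:P)); last by move=> j _; rewrite mxE.
rewrite -rmorph_prod /= mulrC mul_polyC !scalerA.
rewrite (eq_bigr (fun j : 'I_n => (j`!)%:R)); last first.
  move=> j _; rewrite hnth //.
  rewrite (eq_bigr (fun i : 'I_j => ((j.+1)%:R - (i.+1)%:R : R))).
    exact: prod_sub_fact.
  by move=> i _; rewrite hnth // (ltn_trans (ltn_ord i)).
rewrite -!natr_prod prod_factS natrM -mulrA mulrCA (mulrA _ (n`!%:R)) mulVf // mul1r.
rewrite mulVf ?scale1r //; rewrite pnatr_eq0 -lt0n prodn_gt0 // => j; exact: fact_gt0.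
Qed.

Unset Implicit Arguments.

Theorem corollary4p2 (R : realFieldType) (A : nat -> {poly R}) :
  appell A ->
  forall (n : nat) (P : {mpoly R[n]}),
    P \mPo htuple R n = mesym n R n ->
    phiA_expr A P = (n`!%:R)^-1 *: appell_schur A (ones n).
Proof.
move=> hA n P hP.
rewrite (schur_ones hA n) (P_eq hP) /phiA_expr.
pose a := fun k => ((k`!)%:R : R)^-1 *: A k.
have a0 : a 0%N = 1 by rewrite /a; case: hA => -> _; rewrite invr1 scale1r.
have -> : \det (\matrix_(i < n, j < n)
          if (i <= j.+1)%N then ((j.+1 - i)`!%:R : R)^-1 *: A (j.+1 - i)%N else 0)
   = q a n.
  rewrite -hess_det; congr (\det _); apply/matrixP => i j; rewrite !mxE.
  by case: ifP => // _; case: (j.+1 - i)%N.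
rewrite (q_morph (mmap (@polyC R) (fun i : 'I_n => ((i.+1)`!%:R)^-1 *: A i.+1))).
apply: (q_ext (M := n)) => // k /andP [k0 kn].
rewrite /Yv raddf_sum /=.
rewrite (eq_bigr (fun i : 'I_n => a i.+1)); last by move=> i _; rewrite mmapX mmap1U.
by rewrite sum_pred_succ k0 kn.
Qed.
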